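(* Let $p>3$ be a prime and let $$F(p-1,p-1)=\frac{4p-3}{2^{6p-6}}\binom{4p-4}{2p-2}\binom{2p-2}{p-1}.$$ Then $F(p-1,p-1)\equiv -3p^2-12p^3+18p^3q_p(2)\pmod{p^4}$.
   Context: $q_p(2)=(2^{p-1}-1)/p$ is the Fermat quotient. (This is the value at $n=k=p-1$ of $F(n,k)=\frac{6n-2k+1}{2^{8n-2k}}\frac{\binom{2n}{n}\binom{2n+2k}{n+k}\binom{2n-2k}{n-k}\binom{n+k}{n}}{\binom{2k}{k}}$.) For rationals $a,b$, $a\equiv b\pmod{p^m}$ means $a-b=p^m c$ with $c$ a rational whose denominator is prime to $p$. *)

(* Defs.v *)
From HB Require Import structures.
From mathcomp Require Import all_boot all_order all_algebra.
Set Implicit Arguments. Unset Strict Implicit. Unset Printing Implicit Defensive.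
Import Order.TTheory GRing.Theory Num.Theory.
Local Open Scope ring_scope.

Definition rat_congr (p m : nat) (a b : rat) : Prop :=
  exists c : rat, coprime p `|denq c|%N /\ a - b = (p ^ m)%:R * c.

Definition fermat_q2 (p : nat) : rat := ((2 ^ p.-1)%:R - 1) / p%:R.

Definition Fpp (p : nat) : rat :=
  (4 * p - 3)%:R / (2 ^ (6 * p - 6))%:R
    * ('C(4 * p - 4, 2 * p - 2))%:R * ('C(2 * p - 2, p - 1))%:R.

(* Main.v *)
Require Import Defs.
From HB Require Import structures.
From mathcomp Require Import all_boot all_order all_algebra.
From mathcomp Require Import zify ring lra.
Import Order.TTheory GRing.Theory Num.Theory.

Lemma dvd_binp p j : prime p -> j != 0 -> j != p -> p %| 'C(p,j).
Proof.
move=> hp h0 hp'; case: (ltnP j p) => h.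
  by apply: prime_dvd_bin => //; rewrite lt0n h0 h.
by rewrite bin_small // ltn_neqAle eq_sym hp' h.
Qed.

Lemma dvd_bin2p p k : prime p -> 0 < k < p + p -> k != p -> p %| 'C(p + p, k).
Proof.
move=> hp /andP[k0 k2] /eqP kp; rewrite -binomial.Vandermonde; apply: dvdn_sum => [[j /= hj]] _.
have hjk : j <= k by [].
case: (eqVneq j 0) => [->|j0].
  by rewrite bin0 mul1n subn0; apply: dvd_binp => //; apply/eqP; lia.
case: (eqVneq j p) => [ej|jp]; last by apply: dvdn_mulr; apply: dvd_binp.
by rewrite ej; apply: dvdn_mull; apply: dvd_binp => //; apply/eqP; lia.
Qed.

Lemma binrec n : 'C((2*n).+2, n.+1) * (n.+1 * n.+1) = (2*n).+2 * (2*n).+1 * 'C(2*n,n).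
Proof.
have h1 := mul_bin_diag (2*n).+2 n.
have h2 := mul_bin_down (2*n).+1 n.
have e3 : ((2*n).+1 - n = n.+1) by lia.
rewrite /= in h1 h2; rewrite e3 in h2.
set C2 := 'C((2*n).+2, n.+1) in h1 *; set C1 := 'C((2*n).+1, n) in h1 h2; set C0 := 'C(2*n, n) in h2 *.
have -> : C2 * (n.+1 * n.+1) = n.+1 * (n.+1 * C2) by ring.
by rewrite -h1 mulnCA -h2 mulnA.
Qed.

Lemma C2p p : prime p -> exists x, 'C(p + p, p) = 2 + p^2 * x.
Proof.
move=> hp; have p1 : 1 < p by apply: prime_gt1.
rewrite -binomial.Vandermonde -(big_mkord xpredT (fun j => 'C(p, j) * 'C(p, p - j))).
rewrite big_ltn // big_nat_recr /=; last by lia.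
set M := (\sum_(1 <= i < p) _).
have : p^2 %| M.
  rewrite /M big_nat_cond; apply: dvdn_sum => j /andP[/andP[j1 jp] _].
  by rewrite expnS expn1; apply: dvdn_mul; apply: dvd_binp => //; apply/eqP; lia.
move=> /dvdnP[x hx]; exists x.
by rewrite hx bin0 subn0 binn subnn bin0; lia.
Qed.

Lemma C4p p : prime p -> exists y, 'C((p + p) + (p + p), p + p) = 6 + p^2 * y.
Proof.
move=> hp; have p1 : 1 < p by apply: prime_gt1.
have [x hx] := C2p p hp.
rewrite -binomial.Vandermonde -(big_mkord xpredT (fun j => 'C(p+p, j) * 'C(p+p, p + p - j))).
rewrite big_ltn; last by lia.
rewrite (big_cat_nat _ (n:=p)) /=; [|lia|lia].
rewrite [\sum_(p <= i < _) _]big_ltn; last by lia.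
rewrite [\sum_(p.+1 <= i < _) _]big_nat_recr /=; last by lia.
set M1 := (\sum_(1 <= i < p) _).
set M2 := (\sum_(p.+1 <= i < p + p) _).
have D : forall j, 0 < j < p + p -> j != p -> p^2 %| 'C(p+p, j) * 'C(p+p, p+p-j).
  move=> j hj jp; rewrite expnS expn1; apply: dvdn_mul; apply: dvd_bin2p => //; lia.
have : p^2 %| M1.
  rewrite /M1 big_nat_cond; apply: dvdn_sum => j /andP[/andP[j1 jp] _].
  apply: D; lia.
move=> /dvdnP[a ha].
have : p^2 %| M2.
  rewrite /M2 big_nat_cond; apply: dvdn_sum => j /andP[/andP[j1 jp] _].
  apply: D; lia.
move=> /dvdnP[b hb].
exists (a + b + 4 * x + p^2 * x * x).
rewrite ha hb bin0 subn0 binn subnn bin0 (_ : p + p - p = p); last by lia.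
rewrite hx; ring.
Qed.

Lemma fermat2 p : prime p -> 2 < p -> exists u, 2^p.-1 = 1 + p*u.
Proof.
move=> hp p2; have cp2 : coprime p 2.
  by rewrite prime_coprime //; apply/negP => /dvdn_leq h; have := h isT; lia.
case: p hp p2 cp2 => [//|q] hp p2 cp2 /=.
have h := fermat_little 2 hp.
have g1 : 0 < 2^q by rewrite expn_gt0.
have : q.+1 %| 2^q.+1 - 2 by rewrite -eqn_mod_dvd ?h // expnS; lia.
rewrite (_ : 2^q.+1 - 2 = (2^q - 1) * 2); last by rewrite expnS; lia.
rewrite Gauss_dvdl // => /divnK hd.
exists ((2^q - 1) %/ q.+1); lia.
Qed.

Local Open Scope ring_scope.

Lemma denq_dvd (m n D : nat) : (0 < D)%N ->
  (`|denq ((m%:R - n%:R) / D%:R : rat)| %| D)%N.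
Proof.
move=> D0; set x := (_ / _ : rat).
have Dn : (D%:R : rat) != 0 by rewrite pnatr_eq0 -lt0n.
have hx : x * D%:R = (m%:Z - n%:Z)%:~R by rewrite /x divfK // rmorphB /=.
have e : (numq x * D%:Z = (m%:Z - n%:Z) * denq x)%R.
  apply: (@intr_inj rat); rewrite !rmorphM /= numqE -hx /=.
  by rewrite -!mulrA [(denq x)%:~R * _]mulrC.
have : (`|denq x| %| `|numq x| * D)%N.
  have -> : (`|numq x| * D = `|(numq x * D%:Z)%R|)%N by rewrite abszM.
  by rewrite e abszM dvdn_mull.
by rewrite Gauss_dvdr // coprime_sym coprime_num_den.
Qed.

Ltac pos := repeat (apply/andP; split); apply: lt0r_neq0; first [ (apply: ltr_wpDr; [apply: mulr_ge0; lra | lra]) | lra ].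

Theorem lemma2p1 (p : nat) (hp : prime p) (hp3 : (3 < p)%N) :
  rat_congr p 4 (Fpp p)
    (- 3%:R * (p ^ 2)%:R - 12%:R * (p ^ 3)%:R + 18%:R * (p ^ 3)%:R * fermat_q2 p).
Proof.
have [u hu] := fermat2 p hp (ltnW hp3).
have [x hx] := C2p p hp. have [y hy] := C4p p hp.
case: p hp hp3 hu hx hy => [//|q] hp hp3 hu hx hy.
rewrite /= in hu.
have e1 : (q.+1 + q.+1 = (2*q).+2)%N by lia.
have e2 : ((2*q).+2 + (2*q).+2 = (2*(2*q).+1).+2)%N by lia.
rewrite e1 in hx; rewrite e1 e2 in hy.
have r0 := binrec q. have r1 := binrec (2*q). have r2 := binrec (2*q).+1.
have e3 : (2*(2*q).+1 = (2*(2*q)).+2)%N by lia.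
rewrite e3 in hy r2.
rewrite /rat_congr /Fpp /fermat_q2 /=.
have -> : (4*q.+1 - 3 = (4*q).+1)%N by lia.
have -> : (6*q.+1 - 6 = q*6)%N by lia.
have -> : (4*q.+1 - 4 = 2*(2*q))%N by lia.
have -> : (2*q.+1 - 2 = 2*q)%N by lia.
have -> : (q.+1 - 1 = q)%N by lia.
rewrite expnM hu.
set D := (4 * (4*q+3) * (1 + q.+1*u)^6)%N.
have h6 : (0 < (1 + q.+1*u)^6)%N by rewrite expn_gt0 addn_gt0.
have D0 : (0 < D)%N.
  by rewrite /D !muln_gt0 !addn_gt0 !orbT.
have cp2 : coprime q.+1 2.
  by rewrite prime_coprime //; apply/negP => /dvdn_leq hd; have := hd isT; lia.
have cp4 : coprime q.+1 4 by rewrite (_ : 4 = 2^2)%N // coprimeXr.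
have cp43 : coprime q.+1 (4*q+3).
  rewrite prime_coprime //; apply/negP => hd.
  have : (q.+1 %| 4 * q.+1 - (4*q+3))%N by apply: dvdn_sub => //; apply: dvdn_mull.
  rewrite (_ : 4 * q.+1 - (4*q+3) = 1)%N; last by lia.
  by rewrite dvdn1 => /eqP; lia.
have cpu : coprime q.+1 (1 + q.+1*u).
  rewrite prime_coprime //; apply/negP.
  rewrite addnC dvdn_addr ?dvdn_mulr // dvdn1. by move/eqP; lia.
have qge : 0 <= q%:R :> rat by exact: ler0n.
have uge : 0 <= u%:R :> rat by exact: ler0n.
set b0 := 'C(2*q,q) in r0 *. set b1 := 'C((2*q).+2, q.+1) in r0 hx.
set c0 := 'C(2*(2*q), 2*q) in r1 *. set c1 := 'C((2*(2*q)).+2, (2*q).+1) in r1 r2.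
set c2 := 'C((2*(2*q)).+4, (2*q).+2) in r2 hy.
have h0 : b1%:R * (q%:R+1)^+2 = (2*q%:R+2)*(2*q%:R+1)*b0%:R :> rat.
  transitivity ((b1 * (q.+1*q.+1))%:R : rat); first by ring.
  by rewrite r0; ring.
have h1 : c1%:R * (2*q%:R+1)^+2 = (4*q%:R+2)*(4*q%:R+1)*c0%:R :> rat.
  transitivity ((c1 * ((2*q).+1*(2*q).+1))%:R : rat); first by ring.
  by rewrite r1; ring.
have h2 : c2%:R * (2*q%:R+2)^+2 = (4*q%:R+4)*(4*q%:R+3)*c1%:R :> rat.
  transitivity ((c2 * ((2*q).+2*(2*q).+2))%:R : rat); first by ring.
  by rewrite r2; ring.
have hx' : b1%:R = 2 + (q%:R+1)^+2 * x%:R :> rat by rewrite hx; ring.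
have hy' : c2%:R = 6 + (q%:R+1)^+2 * y%:R :> rat by rewrite hy; ring.
have eb0 : b0%:R = b1%:R * (q%:R+1)^+2 / ((2*q%:R+2)*(2*q%:R+1)) :> rat.
  by rewrite h0; field; pos.
have ec1 : c1%:R = c2%:R * (2*q%:R+2)^+2 / ((4*q%:R+4)*(4*q%:R+3)) :> rat.
  by rewrite h2; field; pos.
have ec0 : c0%:R = c1%:R * (2*q%:R+1)^+2 / ((4*q%:R+2)*(4*q%:R+1)) :> rat.
  by rewrite h1; field; pos.
pose m := (6*x + 2*y + q.+1^2*x*y + (192 + 252 * u^2 + 1152 * q.+1^1 * u^1 + 840 * q.+1^1 * u^3 + 2880 * q.+1^2 * u^2 + 1260 * q.+1^2 * u^4 + 3840 * q.+1^3 * u^3 + 1008 * q.+1^3 * u^5 + 2880 * q.+1^4 * u^4 + 420 * q.+1^4 * u^6 + 1152 * q.+1^5 * u^5 + 72 * q.+1^5 * u^7 + 192 * q.+1^6 * u^6))%N.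
pose n := (288 * u + 1728 * q.+1^1 * u^2 + 4320 * q.+1^2 * u^3 + 5760 * q.+1^3 * u^4 + 4320 * q.+1^4 * u^5 + 1728 * q.+1^5 * u^6 + 288 * q.+1^6 * u^7)%N.
exists ((m%:R - n%:R) / D%:R); split.
  apply: (coprime_dvdr (@denq_dvd m n D D0)).
  by rewrite /D coprimeMr coprimeMr cp4 cp43 !andTb; exact: coprimeXr.
rewrite eb0 ec0 ec1 hx' hy' /m /n /D.
clear m n D D0 hx hy eb0 ec0 ec1 hx' hy' h0 h1 h2 r0 r1 r2.
field.
pos.
Qed.
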